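(* Assume: (i) $\nabla_\theta G$ is Lipschitz-continuous with constant $L_0$; (ii) $\|J_\theta f(x_i^u;\theta)\|\le M$ for all $i\in\{1,\dots,N^u\}$ and all $\theta$. If the learning rates satisfy $\alpha_t^2\beta_t<(4M^2L_0)^{-1}$, then each step of the algorithm decreases the labeled loss, regardless of which unlabeled mini-batch is selected: $$G(\theta_{t+1})\le G(\theta_t)\quad\text{for each }t.$$ Moreover, equality holds if and only if $\nabla\tilde y=0$ for the unlabeled batch selected at step $t$.
   Context: **Model and data.** Let $f(x;\theta)\in\mathbb{R}^C$ be a classifier, continuously differentiable in the parameter $\theta\in\mathbb{R}^d$. The labeled data are $\{(x_k^l,y_k)\}_{k=1}^{N^l}$ and the unlabeled data are $\mathcal D^u=\{x_i^u\}_{i=1}^{N^u}$. Write $J_\theta f(x;\theta)\in\mathbb{R}^{C\times d}$ for the Jacobian of $f$ in $\theta$, with $\|\cdot\|$ the operator norm. **Losses.** The loss of a pair is $\mathcal L(x,y;\theta)=\|f(x;\theta)-y\|_2^2$ (squared error). The labeled loss over the full labeled set is $$G(\theta)=\frac{1}{N^l}\sum_{k=1}^{N^l}\mathcal L(x_k^l,y_k;\theta).$$ **The algorithm (meta-gradient SSL).** Start from $\theta_1$, with regular learning rates $\alpha_t>0$ and meta learning rates $\beta_t>0$. All labeled data are used at every step. At step $t$: 1. An unlabeled mini-batch $x_1^u,\dots,x_{B^u}^u$ is sampled from $\mathcal D^u$. 2. For pseudo labels $\tilde y=(\tilde y_1,\dots,\tilde y_{B^u})$, regarded as one vector, set $$\tilde\theta_{t+1}(\tilde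 y)=\theta_t-\frac{\alpha_t}{B^u}\sum_{i=1}^{B^u}\nabla_\theta\mathcal L(x_i^u,\tilde y_i;\theta_t)$$ and $H(\tilde y)=G(\tilde\theta_{t+1}(\tilde y))$. 3. The pseudo labels are initialized at $\tilde y_i=f(x_i^u;\theta_t)$. 4. The meta-gradient is $\nabla\tilde y=\nabla_{\tilde y}H(\tilde y)$, evaluated at this initialization. 5. The pseudo labels are updated as $\hat y=\tilde y-\beta_t\nabla\tilde y$. 6. The parameters are updated as $\theta_{t+1}=\tilde\theta_{t+1}(\hat y)=\theta_t-\frac{\alpha_t}{B^u}\sum_{i=1}^{B^u}\nabla_\theta\mathcal L(x_i^u,\hat y_i;\theta_t)$. *)

(* Defs.v *)
From HB Require Import structures.
From mathcomp Require Import all_boot all_order all_algebra.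
From mathcomp Require Import all_classical all_reals all_analysis.
Set Implicit Arguments. Unset Strict Implicit. Unset Printing Implicit Defensive.
Import Order.TTheory GRing.Theory Num.Theory.
Import numFieldNormedType.Exports.
Local Open Scope classical_set_scope.
Local Open Scope ring_scope.

Section MetaSSL.
Variable R : realType.

Definition norm2 {n} (v : 'rV[R]_n) : R := Num.sqrt (\sum_(j < n) v 0 j ^+ 2).

Definition opnorm {m n} (A : 'M[R]_(m, n)) : R :=
  sup [set norm2 (v *m A^T) | v in [set v : 'rV[R]_n | norm2 v <= 1]].

Definition mgrad {m n} (F : 'M[R]_(m, n) -> R) (A : 'M[R]_(m, n)) : 'M[R]_(m, n) :=
  \matrix_(i, j) ('D_(delta_mx i j) F A).

Definition jac {d C} (F : 'rV[R]_d -> 'rV[R]_C) (th : 'rV[R]_d) : 'M[R]_(C, d) :=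
  \matrix_(c, j) (('D_(delta_mx 0 j) F th) 0 c).

Definition C1 {d C} (F : 'rV[R]_d -> 'rV[R]_C) : Prop :=
  (forall th, differentiable F th) /\ continuous (jac F).

Definition loss {X : Type} {d C} (f : X -> 'rV[R]_d -> 'rV[R]_C)
  (x : X) (y : 'rV[R]_C) (th : 'rV[R]_d) : R :=
  \sum_(c < C) (f x th - y) 0 c ^+ 2.

Definition Gloss {X : Type} {d C Nl} (f : X -> 'rV[R]_d -> 'rV[R]_C)
  (xl : 'I_Nl -> X) (yl : 'I_Nl -> 'rV[R]_C) (th : 'rV[R]_d) : R :=
  (Nl%:R)^-1 * \sum_(k < Nl) loss f (xl k) (yl k) th.

(* One step of the algorithm.  The mini-batch is batch : 'I_B -> 'I_Nu,
   pseudo labels are stored as the rows of a B x C matrix (one vector). *)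
Section Step.
Context {X : Type} {d C Nl Nu B : nat} (f : X -> 'rV[R]_d -> 'rV[R]_C)
  (xl : 'I_Nl -> X) (yl : 'I_Nl -> 'rV[R]_C) (xu : 'I_Nu -> X)
  (batch : 'I_B -> 'I_Nu) (alpha beta : R) (th_t : 'rV[R]_d).

Definition theta_tilde (yt : 'M[R]_(B, C)) : 'rV[R]_d :=
  th_t - (alpha / B%:R) *:
    \sum_(i < B) mgrad (fun th => loss f (xu (batch i)) (row i yt) th) th_t.

Definition Hmeta (yt : 'M[R]_(B, C)) : R := Gloss f xl yl (theta_tilde yt).

Definition y_init : 'M[R]_(B, C) := \matrix_(i < B) f (xu (batch i)) th_t.

Definition meta_grad : 'M[R]_(B, C) := mgrad Hmeta y_init.

Definition y_hat : 'M[R]_(B, C) := y_init - beta *: meta_grad.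

Definition theta_next : 'rV[R]_d := theta_tilde y_hat.
End Step.

End MetaSSL.

(* Main.v *)
Set Implicit Arguments. Unset Strict Implicit.
Require Import Defs.
From HB Require Import structures.
From mathcomp Require Import all_boot all_order all_algebra.
From mathcomp Require Import all_classical all_reals all_analysis.
From mathcomp Require Import ring lra.
Import Order.TTheory GRing.Theory Num.Theory.
Import numFieldNormedType.Exports.
Local Open Scope ring_scope.

Section LinAlg.
Context {R : realType}.
Implicit Types n m : nat.

Definition dot {n} (a b : 'rV[R]_n) : R := \sum_j a 0 j * b 0 j.

Lemma norm2E n (v : 'rV[R]_n) : norm2 v = Num.sqrt (dot v v).
Proof. by rewrite /norm2 /dot; under eq_bigr do rewrite expr2. Qed.

Lemma dot_ge0 n (v : 'rV[R]_n) : 0 <= dot v v.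
Proof. by apply: sumr_ge0 => j _; rewrite -expr2 sqr_ge0. Qed.

Lemma norm2_ge0 n (v : 'rV[R]_n) : 0 <= norm2 v.
Proof. by rewrite norm2E sqrtr_ge0. Qed.

Lemma norm2_sqr n (v : 'rV[R]_n) : norm2 v ^+ 2 = dot v v.
Proof. by rewrite norm2E sqr_sqrtr // dot_ge0. Qed.

Lemma dot0_eq n (v : 'rV[R]_n) : dot v v = 0 -> v = 0.
Proof.
move=> h; apply/rowP => j; rewrite mxE.
have := @psumr_eq0P R _ xpredT (fun j => v 0 j * v 0 j).
move=> /(_ (fun j _ => ltac:(by rewrite -expr2 sqr_ge0)) h j isT) /eqP.
by rewrite mulf_eq0 orbb => /eqP.
Qed.

Lemma norm2_eq0 n (v : 'rV[R]_n) : norm2 v = 0 -> v = 0.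
Proof. by move=> h; apply: dot0_eq; rewrite -norm2_sqr h expr2 mulr0. Qed.

Lemma dotC n (a b : 'rV[R]_n) : dot a b = dot b a.
Proof. by apply: eq_bigr => j _; rewrite mulrC. Qed.

Lemma dot_expand n (a b : 'rV[R]_n) x y :
  dot (x *: a - y *: b) (x *: a - y *: b) =
  x ^+ 2 * dot a a - 2 * x * y * dot a b + y ^+ 2 * dot b b.
Proof.
rewrite /dot !mulr_sumr -sumrN -!big_split; apply: eq_bigr => j _ /=.
rewrite !mxE; ring.
Qed.

Lemma dotNl n (a b : 'rV[R]_n) : dot (- a) b = - dot a b.
Proof. by rewrite /dot -sumrN; apply: eq_bigr => j _; rewrite mxE mulNr. Qed.

Lemma dotBl n (a b c : 'rV[R]_n) : dot (a - b) c = dot a c - dot b c.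
Proof.
by rewrite /dot -sumrN -big_split; apply: eq_bigr => j _; rewrite !mxE /=; ring.
Qed.

Lemma dotZl n (a b : 'rV[R]_n) k : dot (k *: a) b = k * dot a b.
Proof. by rewrite /dot mulr_sumr; apply: eq_bigr => j _; rewrite mxE mulrA. Qed.

Lemma dotZr n (a b : 'rV[R]_n) k : dot a (k *: b) = k * dot a b.
Proof. by rewrite dotC dotZl dotC. Qed.

Lemma dot_suml n I (r : seq I) (P : pred I) (F : I -> 'rV[R]_n) b :
  dot (\sum_(i <- r | P i) F i) b = \sum_(i <- r | P i) dot (F i) b.
Proof.
rewrite /dot exchange_big /=; apply: eq_bigr => j _.
by rewrite summxE mulr_suml.
Qed.

Lemma dot_mulmx m n (u : 'rV[R]_m) (A : 'M[R]_(m, n)) z :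
  dot (u *m A) z = dot u (z *m A^T).
Proof.
rewrite /dot; under eq_bigr do rewrite mxE mulr_suml.
rewrite exchange_big /=; apply: eq_bigr => i _.
rewrite mxE mulr_sumr; apply: eq_bigr => j _; rewrite !mxE; ring.
Qed.

Lemma norm2Z n (v : 'rV[R]_n) k : norm2 (k *: v) = `|k| * norm2 v.
Proof.
rewrite !norm2E dotZl dotZr mulrA -expr2 sqrtrM ?sqr_ge0 //.
by rewrite sqrtr_sqr.
Qed.

Lemma norm2N n (v : 'rV[R]_n) : norm2 (- v) = norm2 v.
Proof. by rewrite -scaleN1r norm2Z normrN normr1 mul1r. Qed.

Lemma CS n (a b : 'rV[R]_n) : dot a b <= norm2 a * norm2 b.
Proof.
set A := norm2 a; set Bb := norm2 b.
have hA : 0 <= A by apply: norm2_ge0.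
have hB : 0 <= Bb by apply: norm2_ge0.
have eA : A ^+ 2 = dot a a by apply: norm2_sqr.
have eB : Bb ^+ 2 = dot b b by apply: norm2_sqr.
have h := dot_ge0 (Bb *: a - A *: b).
rewrite dot_expand -eA -eB in h.
have [AB0|ABpos] := eqVneq (A * Bb) 0.
  move/eqP: AB0; rewrite mulf_eq0 => /orP[/eqP A0|/eqP B0].
    by rewrite (norm2_eq0 A0) /dot big1 ?mulr_ge0 // => j _; rewrite mxE mul0r.
  by rewrite (norm2_eq0 B0) /dot big1 ?mulr_ge0 // => j _; rewrite mxE mulr0.
have ABp : 0 < A * Bb by rewrite lt_def ABpos /= mulr_ge0.
nra.
Qed.

Lemma CS_abs n (a b : 'rV[R]_n) : `|dot a b| <= norm2 a * norm2 b.
Proof.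
rewrite ler_norml CS andbT lerNl -dotNl.
by rewrite -(norm2N a) CS.
Qed.

Lemma CS_sqr n (a b : 'rV[R]_n) : dot a b ^+ 2 <= dot a a * dot b b.
Proof.
rewrite -!norm2_sqr -exprMn -real_normK ?num_real //.
by rewrite ler_sqr ?nnegrE ?normr_ge0 ?mulr_ge0 ?norm2_ge0 // CS_abs.
Qed.


Lemma mulmx_tr_entry m n (v : 'rV[R]_n) (A : 'M[R]_(m, n)) c :
  (v *m A^T) 0 c = dot v (row c A).
Proof. by rewrite mxE; apply: eq_bigr => j _; rewrite !mxE. Qed.

Lemma opnorm_bound m n (A : 'M[R]_(m, n)) M : opnorm A <= M ->
  0 <= M /\ forall v : 'rV[R]_n, norm2 (v *m A^T) <= M * norm2 v.
Proof.
move=> hM.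
set S := [set norm2 (v *m A^T) | v in [set v : 'rV[R]_n | norm2 v <= 1]]%classic.
have hub : has_ubound S.
  exists (Num.sqrt (\sum_c dot (row c A) (row c A))) => x [v hv <-].
  rewrite norm2E ler_sqrt; last by apply: sumr_ge0 => c _; apply: dot_ge0.
  rewrite /dot.
  apply: ler_sum => c _.
  rewrite -/(dot (v *m A^T) (v *m A^T)) /= -expr2 mulmx_tr_entry.
  apply: le_trans (CS_sqr _ _) _.
  rewrite ler_piMl ?dot_ge0 // -norm2_sqr.
  by rewrite expr_le1 // norm2_ge0.
have hsup : forall v : 'rV[R]_n, norm2 v <= 1 -> norm2 (v *m A^T) <= M.
  move=> v hv; apply: le_trans hM; apply: (ub_le_sup hub); by exists v.
have n0 : forall k, norm2 (0 : 'rV[R]_k) = 0.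
  by move=> k; rewrite norm2E /dot big1 ?sqrtr0 // => j _; rewrite mxE mul0r.
have M0 : 0 <= M.
  apply: le_trans (hsup 0 _); first exact: norm2_ge0.
  by rewrite n0 ler01.
split=> // v.
have [v0|vn0] := eqVneq (norm2 v) 0.
  by rewrite (norm2_eq0 v0) mul0mx !n0 mulr0.
have np : 0 < norm2 v by rewrite lt_def vn0 norm2_ge0.
have := hsup ((norm2 v)^-1 *: v).
rewrite norm2Z -scalemxAl norm2Z ger0_norm ?invr_ge0 ?norm2_ge0 //.
rewrite mulVf // lexx => /(_ isT).
rewrite ler_pdivrMl // mulrC //.
Qed.

Lemma trans_bound m n (A : 'M[R]_(m, n)) M : 0 <= M ->
  (forall v, norm2 (v *m A^T) <= M * norm2 v) ->
  forall u : 'rV[R]_m, norm2 (u *m A) <= M * norm2 u.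
Proof.
move=> M0 hv u; set w := u *m A.
have h1 : norm2 w ^+ 2 <= norm2 u * (M * norm2 w).
  rewrite norm2_sqr {1}/w dot_mulmx.
  apply: le_trans (CS _ _) _.
  by rewrite ler_wpM2l ?norm2_ge0.
have hw := norm2_ge0 w; have hu := norm2_ge0 u.
have [w0|wn0] := eqVneq (norm2 w) 0; first by rewrite w0 mulr_ge0.
have wp : 0 < norm2 w by rewrite lt_def wn0.
nra.
Qed.

Lemma sum_sq n B (z : 'I_B -> 'rV[R]_n) :
  dot (\sum_i z i) (\sum_i z i) <= B%:R * \sum_i dot (z i) (z i).
Proof.
have -> : B%:R * \sum_i dot (z i) (z i) =
    \sum_j (B%:R * \sum_i z i 0 j * z i 0 j).
  by rewrite -mulr_sumr /dot exchange_big.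
rewrite /dot; apply: ler_sum => j _.
rewrite summxE -expr2.
have := CS_sqr (\row_(i < B) z i 0 j) (\row_(i < B) (1 : R)).
rewrite /dot.
have e1 : \sum_(i < B) (\row_(i0 < B) z i0 0 j) 0 i * (\row_(_ < B) (1:R)) 0 i
   = \sum_(i < B) z i 0 j by apply: eq_bigr => i _; rewrite !mxE mulr1.
have e2 : \sum_(i < B) (\row_(i0 < B) (1:R)) 0 i * (\row_(_ < B) (1:R)) 0 i
   = B%:R by rewrite (eq_bigr (fun=> 1)) ?sumr_const ?card_ord // => i _; rewrite !mxE mulr1.
have e3 : \sum_(i < B) (\row_(i0 < B) z i0 0 j) 0 i * (\row_(i0 < B) z i0 0 j) 0 i
   = \sum_(i < B) z i 0 j * z i 0 j by apply: eq_bigr => i _; rewrite !mxE.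
rewrite e1 e2 e3 mulrC => h; apply: le_trans h _.
by rewrite le_eqVlt eqxx.
Qed.

End LinAlg.
Section Analysis.
Context {R : realType}.

Lemma D_lin d (W : normedModType R) (F : 'rV[R]_d -> W) th v :
  differentiable F th ->
  'D_v F th = \sum_j v 0 j *: 'D_('e_j) F th.
Proof.
move=> dF; rewrite deriveE // {1}(row_sum_delta v) linear_sum.
by apply: eq_bigr => j _; rewrite linearZ deriveE.
Qed.

Lemma grad_dot d (G : 'rV[R]_d -> R) th v :
  differentiable G th -> 'D_v G th = dot v (mgrad G th).
Proof.
move=> dG; rewrite D_lin // /dot; apply: eq_bigr => j _.
by rewrite mxE.
Qed.

Lemma comp_derivable d C (F : 'rV[R]_d -> 'rV[R]_C) th v c :
  differentiable F th -> derivable (fun t => F t 0 c) th v.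
Proof. by move=> dF; move: (@diff_derivable _ _ _ _ _ v dF) => /derivable_mxP; apply. Qed.

Lemma comp_derive d C (F : 'rV[R]_d -> 'rV[R]_C) th v c :
  differentiable F th -> 'D_v (fun t => F t 0 c) th = ('D_v F th) 0 c.
Proof. by move=> dF; rewrite derive_mx ?mxE //; apply: diff_derivable. Qed.

Lemma D_comp_entry d C (F : 'rV[R]_d -> 'rV[R]_C) th v c :
  differentiable F th ->
  ('D_v F th) 0 c = \sum_j v 0 j * jac F th c j.
Proof.
move=> dF; rewrite D_lin // summxE; apply: eq_bigr => j _.
by rewrite !mxE.
Qed.

Lemma loss_fun (X : Type) d C (f : X -> 'rV[R]_d -> 'rV[R]_C) x y :
  loss f x y = \sum_c ((fun t => f x t 0 c) - cst (y 0 c)) ^+ 2.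
Proof.
apply/funext => t; rewrite /loss fct_sumE; apply: eq_bigr => c _.
by rewrite !mxE.
Qed.

Lemma loss_diff (X : Type) d C (f : X -> 'rV[R]_d -> 'rV[R]_C) x y th :
  differentiable (f x) th -> differentiable (loss f x y) th.
Proof.
move=> dF; rewrite loss_fun; apply: differentiable_sum => c.
apply: differentiableX; apply: differentiableB; last exact: differentiable_cst.
have -> : (fun t => f x t 0 c) = (fun N : 'M[R]_(1, C) => N 0 c) \o f x by [].
apply: differentiable_comp => //; exact: differentiable_coord.
Qed.

Lemma loss_derive (X : Type) d C (f : X -> 'rV[R]_d -> 'rV[R]_C) x y th v :
  differentiable (f x) th ->
  'D_v (loss f x y) th = \sum_c 2 * (f x th - y) 0 c * ('D_v (f x) th) 0 c.
Proof.
move=> dF; rewrite loss_fun derive_sum; last first.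
  move=> c; apply: derivableX; apply: derivableB; last exact: derivable_cst.
  exact: comp_derivable.
apply: eq_bigr => c _; rewrite deriveX; last first.
  apply: derivableB; last exact: derivable_cst; exact: comp_derivable.
rewrite deriveB ?derivable_cst //; last exact: comp_derivable.
rewrite derive_cst subr0 comp_derive // !mxE /= expr1.
by [].
Qed.

Lemma grad_loss (X : Type) d C (f : X -> 'rV[R]_d -> 'rV[R]_C) x y th :
  differentiable (f x) th ->
  mgrad (loss f x y) th = 2 *: ((f x th - y) *m jac (f x) th).
Proof.
move=> dF; apply/rowP => j; rewrite !mxE loss_derive // mulr_sumr.
by apply: eq_bigr => c _; rewrite !mxE -mulrA; congr (_ * _).
Qed.

Lemma shift_derive (V1 V2 W : normedModType R) (F : V1 -> W) (G : V2 -> W)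
  a v b u : (forall h : R, F (h *: v + a) = G (h *: u + b)) ->
  'D_v F a = 'D_u G b /\ (derivable F a v <-> derivable G b u).
Proof.
move=> h.
have e0 : F a = G b by have := h 0; rewrite !scale0r !add0r.
rewrite /derive /derivable.
have -> : (fun h0 : R => h0^-1 *: ((F \o shift a) (h0 *: v) - F a)) =
          (fun h0 : R => h0^-1 *: ((G \o shift b) (h0 *: u) - G b)).
  by apply/funext => h0 /=; rewrite h e0.
by [].
Qed.

End Analysis.
Section Descent.
Context {R : realType}.

Lemma descent d (G : 'rV[R]_d -> R) L0 th D :
  (forall t, differentiable G t) ->
  (forall th1 th2, norm2 (mgrad G th1 - mgrad G th2) <= L0 * norm2 (th1 - th2)) ->
  0 <= L0 ->
  G (D + th) - G th <= dot D (mgrad G th) + L0 * dot D D.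
Proof.
move=> dG hL L0p.
pose phi := fun t : R => G (t *: D + th).
have hsh : forall t : R, 'D_1 phi t = 'D_D G (t *: D + th) /\
    (derivable phi t 1 <-> derivable G (t *: D + th) D).
  move=> t; apply: shift_derive => h.
  by rewrite /phi /GRing.scale /= mulr1 -/(GRing.scale _ _) scalerDl addrA.
have hder : forall t : R, is_derive t (1:R) phi ('D_D G (t *: D + th)).
  move=> t; have [e1 e2] := hsh t; apply: DeriveDef => //.
  by apply/e2; apply: diff_derivable.
have hcont : {within `[0, 1], continuous phi}%classic.
  apply: continuous_subspaceT => t.
  apply: differentiable_continuous; apply/derivable1_diffP.
  by have [_ ->] := hsh t; apply: diff_derivable.
have [c cI hc] := MVT ltr01 (fun t _ => hder t) hcont.
move: cI; rewrite in_itv /= => /andP[c0 c1].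
move: hc; rewrite /phi scale1r scale0r add0r subr0 mulr1 => ->.
rewrite grad_dot // -[X in dot D X](subrK (mgrad G th)) dotC.
rewrite (_ : dot (_ + _) D = dot (mgrad G (c *: D + th) - mgrad G th) D
                            + dot (mgrad G th) D); last first.
  by rewrite /dot -big_split; apply: eq_bigr => j _; rewrite !mxE mulrDl.
rewrite [dot (mgrad G th) D]dotC addrC lerD2l.
apply: le_trans (CS _ _) _.
have h1 := hL (c *: D + th) th.
rewrite addrK norm2Z (ger0_norm (ltW c0)) in h1.
have hn := norm2_ge0 D.
have h2 := ler_wpM2r hn h1.
apply: le_trans h2 _.
rewrite -norm2_sqr.
have hP : 0 <= L0 * norm2 D ^+ 2 by rewrite mulr_ge0 // sqr_ge0.
nra.
Qed.

End Descent.
Unset Implicit Arguments. Set Strict Implicit.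
Theorem theorem1 (R : realType) (X : Type) (d C Nl Nu B : nat)
  (f : X -> 'rV[R]_d -> 'rV[R]_C)
  (xl : 'I_Nl -> X) (yl : 'I_Nl -> 'rV[R]_C) (xu : 'I_Nu -> X)
  (L0 M alpha beta : R) (th_t : 'rV[R]_d) (batch : 'I_B -> 'I_Nu) :
  (forall x, C1 (f x)) ->
  (forall th1 th2 : 'rV[R]_d,
      norm2 (mgrad (Gloss f xl yl) th1 - mgrad (Gloss f xl yl) th2)
      <= L0 * norm2 (th1 - th2)) ->
  (forall (i : 'I_Nu) (th : 'rV[R]_d), opnorm (jac (f (xu i)) th) <= M) ->
  0 < alpha -> 0 < beta ->
  4 * M ^+ 2 * L0 * (alpha ^+ 2 * beta) < 1 ->
  Gloss f xl yl (theta_next f xl yl xu batch alpha beta th_t)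
    <= Gloss f xl yl th_t
  /\ (Gloss f xl yl (theta_next f xl yl xu batch alpha beta th_t)
        = Gloss f xl yl th_t
      <-> meta_grad f xl yl xu batch alpha th_t = 0).
Proof.
move=> hC1 hL hM a0 b0 hcond.
have dF : forall x th, differentiable (f x) th by move=> x th; exact: (hC1 x).1.
have dG : forall th, differentiable (Gloss f xl yl) th.
  move=> th.
  have -> : Gloss f xl yl = (fun=> (Nl%:R)^-1) * \sum_k loss f (xl k) (yl k).
    by apply/funext => t; rewrite /Gloss fct_sumE.
  apply: differentiableM; first exact: differentiable_cst.
  by apply: differentiable_sum => k; apply: loss_diff.
set G := Gloss f xl yl.
set J := fun i : 'I_B => jac (f (xu (batch i))) th_t.
set g := mgrad G th_t.
set cc := alpha / B%:R.
set K := fun yt : 'M[R]_(B, C) => \sum_i row i yt *m J i.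
set y0 := y_init f xu batch th_t.
have KD : forall a b, K (a + b) = K a + K b.
  move=> a b; rewrite /K -big_split; apply: eq_bigr => i _ /=.
  rewrite -mulmxDl; congr (_ *m _); apply/rowP => j; rewrite !mxE //.
have KZ : forall k a, K (k *: a) = k *: K a.
  move=> k a; rewrite /K scaler_sumr; apply: eq_bigr => i _ /=.
  rewrite scalemxAl; congr (_ *m _); apply/rowP => j; rewrite !mxE //.
have hT : forall yt, theta_tilde f xu batch alpha th_t yt =
    th_t + (2 * cc) *: (K yt - K y0).
  move=> yt; rewrite /theta_tilde.
  have e : forall i, mgrad (fun th => loss f (xu (batch i)) (row i yt) th) th_t
      = 2 *: ((f (xu (batch i)) th_t - row i yt) *m J i).
    by move=> i; apply: grad_loss.
  rewrite (eq_bigr _ (fun i _ => e i)).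
  have e2 : \sum_i 2 *: ((f (xu (batch i)) th_t - row i yt) *m J i)
      = 2 *: (K y0 - K yt).
    rewrite /K -sumrB scaler_sumr; apply: eq_bigr => i _.
    by rewrite /y0 /y_init rowK mulmxBl.
  by rewrite e2 scalerA -scalerN opprB mulrC.
have Kd : forall i k, K (delta_mx i k) = 'e_k *m J i.
  move=> i k; rewrite /K (bigD1 i) //= big1 ?addr0 => [|i' ne].
    by rewrite rowE mul_delta_mx_cond eqxx mulr1n.
  by rewrite rowE mul_delta_mx_cond (negbTE ne) mulr0n mul0mx.
have dot_e : forall n (w : 'rV[R]_n) k, dot 'e_k w = w 0 k.
  move=> n w k; rewrite /dot (bigD1 k) //= big1 ?addr0 => [|j ne].
    by rewrite !mxE !eqxx mul1r.
  by rewrite !mxE (negbTE ne) andbF mul0r.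
have MG : meta_grad f xl yl xu batch alpha th_t =
    \matrix_(i, k) (2 * cc * (g *m (J i)^T) 0 k).
  apply/matrixP => i k; rewrite /meta_grad /mgrad mxE [RHS]mxE.
  have hs : forall h : R, Hmeta f xl yl xu batch alpha th_t (h *: delta_mx i k + y0)
      = G (h *: ((2 * cc) *: ('e_k *m J i)) + th_t).
    move=> h; rewrite /Hmeta hT KD KZ Kd addrK -/G addrC; congr (G (_ + _)).
    by rewrite !scalerA mulrC.
  have [-> _] := shift_derive hs.
  by rewrite grad_dot // dotZl dot_mulmx dot_e.
set u := fun i => g *m (J i)^T.
set w := \sum_i u i *m J i.
set q := (2 * cc) ^+ 2 * beta.
have Kmg : K (meta_grad f xl yl xu batch alpha th_t) = (2 * cc) *: w.
  rewrite MG /K /w scaler_sumr; apply: eq_bigr => i _.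
  rewrite scalemxAl; congr (_ *m _); apply/rowP => k; rewrite !mxE //.
have TN : theta_next f xl yl xu batch alpha beta th_t = (- q) *: w + th_t.
  rewrite /theta_next /y_hat -/y0 hT -scaleNr KD KZ [K y0 + _]addrC addrK Kmg.
  rewrite addrC !scalerA; congr (_ *: _ + _); rewrite /q; ring.
set S := \sum_i dot (u i) (u i).
have S0 : 0 <= S by apply: sumr_ge0 => i _; apply: dot_ge0.
have hdg : dot ((- q) *: w) g = - q * S.
  rewrite dotZl /w dot_suml /S; congr (_ * _); apply: eq_bigr => i _.
  by rewrite dot_mulmx.
have hdd : dot ((- q) *: w) ((- q) *: w) <= q ^+ 2 * (B%:R * (M ^+ 2 * S)).
  rewrite dotZl dotZr mulrA mulrNN -expr2 ler_wpM2l ?sqr_ge0 //.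
  apply: le_trans (sum_sq _) _; rewrite ler_wpM2l ?ler0n // /S mulr_sumr.
  apply: ler_sum => i _.
  have [M0 hb] := opnorm_bound (hM (batch i) th_t).
  have := trans_bound M0 hb (u i).
  rewrite -/(J i) -norm2_sqr -norm2_sqr -exprMn => h.
  by rewrite ler_sqr ?nnegrE ?norm2_ge0 ?mulr_ge0 ?norm2_ge0.
have hG := @descent R d (Gloss f xl yl) L0 th_t ((- q) *: w) dG hL.
rewrite TN.
have [Seq0 | Spos] := eqVneq S 0.
  have u0 : forall i, u i = 0.
    move=> i; apply: dot0_eq.
    exact: (psumr_eq0P (fun i _ => dot_ge0 (u i)) Seq0 (i := i) isT).
  have w0 : w = 0 by rewrite /w big1 // => i _; rewrite u0 mul0mx.
  have mg0 : meta_grad f xl yl xu batch alpha th_t = 0.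
    rewrite MG; apply/matrixP => i k; rewrite !mxE.
    by have := u0 i; move/rowP => /(_ k); rewrite !mxE => ->; rewrite mulr0.
  by rewrite w0 scaler0 add0r; split.
have Sp : 0 < S by rewrite lt_def Spos S0.
have [i0 _ | none] := pickP (fun i : 'I_B => true); last first.
  by move: Spos; rewrite /S big1 ?eqxx // => i _; have := none i.
have Bp : (0 < B)%N by apply: leq_ltn_trans (leq0n i0) (ltn_ord i0).
have Bp' : (0 : R) < B%:R by rewrite ltr0n.
have ccp : 0 < cc by rewrite divr_gt0.
have qp : 0 < q by rewrite /q mulr_gt0 // exprn_gt0 // mulr_gt0.
have Dn0 : (- q) *: w != 0.
  apply/eqP => D0; move: hdg; rewrite D0 /dot big1 => [|j _]; last by rewrite mxE mul0r.
  move=> h; have : q * S = 0 by rewrite -[q * S]opprK -mulNr -h oppr0.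
  by move/eqP; rewrite mulf_eq0 (gt_eqF qp) (gt_eqF Sp).
have L0p : 0 <= L0.
  have := hL ((- q) *: w + th_t) th_t; rewrite addrK.
  have np : 0 < norm2 ((- q) *: w).
    rewrite lt_def norm2_ge0 andbT; apply/eqP => h0.
    by move/eqP: Dn0; apply; apply: norm2_eq0.
  have := norm2_ge0 (mgrad G ((- q) *: w + th_t) - mgrad G th_t).
  nra.
have {}hG := hG L0p; rewrite -/g hdg in hG.
have eqB : q * B%:R = 4 * alpha ^+ 2 * beta / B%:R.
  rewrite /q /cc; field; by rewrite gt_eqF.
have hT1 : L0 * q * B%:R * M ^+ 2 < 1.
  apply: le_lt_trans hcond.
  rewrite (_ : L0 * q * B%:R * M ^+ 2 = L0 * (q * B%:R) * M ^+ 2); last by ring.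
  rewrite eqB.
  have Z0 : 0 <= 4 * M ^+ 2 * L0 * (alpha ^+ 2 * beta).
    have := sqr_ge0 M; have := sqr_ge0 alpha; have := ltW b0.
    move=> h1 h2 h3; apply: mulr_ge0; last exact: mulr_ge0.
    by apply: mulr_ge0 => //; apply: mulr_ge0.
  rewrite (_ : L0 * (4 * alpha ^+ 2 * beta / B%:R) * M ^+ 2 =
     4 * M ^+ 2 * L0 * (alpha ^+ 2 * beta) / B%:R); last by ring.
  rewrite ler_pdivrMr // ler_peMr // ler1n //.
have hlt : G ((- q) *: w + th_t) - G th_t < 0.
  apply: le_lt_trans hG _.
  apply: le_lt_trans (lerD (lexx _) (ler_wpM2l L0p hdd)) _.
  have -> : L0 * (q ^+ 2 * (B%:R * (M ^+ 2 * S))) = q * S * (L0 * q * B%:R * M ^+ 2)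
    by ring.
  have := mulr_gt0 qp Sp; nra.
split; first by rewrite -subr_le0 ltW.
split; first by move=> h; move: hlt; rewrite h subrr ltxx.
move=> mg0; exfalso; move/eqP: Spos; apply.
rewrite /S big1 // => i _.
have ui0 : u i = 0.
  apply/rowP => k; move/matrixP: mg0 => /(_ i k); rewrite MG !mxE => /eqP.
  rewrite mulf_eq0 mulf_eq0 pnatr_eq0 (gt_eqF ccp) /= => /eqP.
  by [].
by rewrite ui0 /dot big1 // => j _; rewrite mxE mul0r.
Qed.
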